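(* The local homeomorphism $f:D\to Y$ is a homeomorphism of $D$ onto $Y$ if and only if the auxiliary flow $\Phi$ is a global dynamical system, i.e. $D_\Phi=D\times\mathbb R$.
   Context: Standing setting: $X,Y$ are real Banach spaces, $D\subseteq X$ is a nonempty open connected set, $f:D\to Y$ is a local homeomorphism (every point has an open neighbourhood mapped homeomorphically onto an open set), $x_0\in D$, $y_0=f(x_0)$. A flow in $D$ is a map $\Phi:D_\Phi\to D$ such that: (i) $D_\Phi$ is an open subset of $D\times\mathbb R$ and $\Phi$ is continuous; (ii) for each $x\in D$, $\{t:(x,t)\in D_\Phi\}$ is an interval containing $0$; (iii) $\Phi(x,0)=x$; (iv) if $(x,t_1),(x,t_1+t_2)\in D_\Phi$ then $(\Phi(x,t_1),t_2)\in D_\Phi$ and $\Phi(\Phi(x,t_1),t_2)=\Phi(x,t_1+t_2)$. Let $\Psi(y,t)=y_0+e^{-t}(y-y_0)$ for $y\in Y,t\in\mathbb R$. The auxiliary flow $\Phi$ is the unique flow in $D$ of maximal domain with $f(\Phi(x,t))=\Psi(f(x),t)$ for all $(x,t)\in D_\Phi$; for each $x$, $t\mapsto\Phi(x,t)$ is the maximal continuous lifting by $f$ of $t\mapsto\Psi(f(x),t)$ through $x$ at $t=0$. *)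

(* Defs.v *)
From Stdlib Require Import Reals.
Open Scope R_scope.

Record NormedSpace := {
  carrier :> Type;
  vzero : carrier;
  vadd : carrier -> carrier -> carrier;
  vopp : carrier -> carrier;
  vscal : R -> carrier -> carrier;
  vnorm : carrier -> R;
  vadd_assoc : forall x y z, vadd x (vadd y z) = vadd (vadd x y) z;
  vadd_comm : forall x y, vadd x y = vadd y x;
  vadd_zero : forall x, vadd x vzero = x;
  vadd_opp : forall x, vadd x (vopp x) = vzero;
  vscal_one : forall x, vscal 1 x = x;
  vscal_assoc : forall a b x, vscal a (vscal b x) = vscal (a * b) x;
  vscal_distr_l : forall a b x, vscal (a + b) x = vadd (vscal a x) (vscal b x);
  vscal_distr_r : forall a x y, vscal a (vadd x y) = vadd (vscal a x) (vscal a y);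
  vnorm_eq0 : forall x, vnorm x = 0 -> x = vzero;
  vnorm_scal : forall a x, vnorm (vscal a x) = Rabs a * vnorm x;
  vnorm_triangle : forall x y, vnorm (vadd x y) <= vnorm x + vnorm y
}.

Arguments vzero {_}.
Arguments vadd {_} _ _.
Arguments vopp {_} _.
Arguments vscal {_} _ _.
Arguments vnorm {_} _.

Definition vsub {X : NormedSpace} (x y : X) : X := vadd x (vopp y).
Definition dist {X : NormedSpace} (x y : X) : R := vnorm (vsub x y).

Definition complete (X : NormedSpace) : Prop :=
  forall u : nat -> X,
    (forall eps, eps > 0 -> exists N, forall m n, (m >= N)%nat -> (n >= N)%nat ->
        dist (u m) (u n) < eps) ->
    exists l : X, forall eps, eps > 0 -> exists N, forall n, (n >= N)%nat ->
        dist (u n) l < eps.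

Record BanachSpace := {
  bs_space :> NormedSpace;
  bs_complete : complete bs_space
}.

Definition is_open {X : NormedSpace} (U : X -> Prop) : Prop :=
  forall x, U x -> exists eps, eps > 0 /\ forall y, dist y x < eps -> U y.

Definition is_open_prod {X : NormedSpace} (W : X -> R -> Prop) : Prop :=
  forall x t, W x t -> exists eps, eps > 0 /\
    forall y s, dist y x < eps -> Rabs (s - t) < eps -> W y s.

Definition is_connected {X : NormedSpace} (D : X -> Prop) : Prop :=
  forall A B : X -> Prop, is_open A -> is_open B ->
    (forall x, D x -> A x \/ B x) ->
    (forall x, D x -> A x -> B x -> False) ->
    (forall x, D x -> ~ A x) \/ (forall x, D x -> ~ B x).

Definition continuous_on {X Y : NormedSpace} (U : X -> Prop) (f : X -> Y) : Prop :=
  forall x, U x -> forall eps, eps > 0 -> exists delta, delta > 0 /\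
    forall y, U y -> dist y x < delta -> dist (f y) (f x) < eps.

Definition continuous_on2 {X Z : NormedSpace} (W : X -> R -> Prop) (F : X -> R -> Z) : Prop :=
  forall x t, W x t -> forall eps, eps > 0 -> exists delta, delta > 0 /\
    forall y s, W y s -> dist y x < delta -> Rabs (s - t) < delta ->
      dist (F y s) (F x t) < eps.

Definition local_homeomorphism {X Y : NormedSpace} (D : X -> Prop) (f : X -> Y) : Prop :=
  forall x, D x -> exists (U : X -> Prop) (V : Y -> Prop) (g : Y -> X),
    is_open U /\ U x /\ (forall u, U u -> D u) /\ is_open V /\
    (forall u, U u -> V (f u) /\ g (f u) = u) /\
    (forall v, V v -> U (g v) /\ f (g v) = v) /\
    continuous_on U f /\ continuous_on V g.

Definition homeomorphism_onto {X Y : NormedSpace} (D : X -> Prop) (f : X -> Y) : Prop :=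
  continuous_on D f /\
  exists g : Y -> X,
    (forall y, D (g y) /\ f (g y) = y) /\
    (forall x, D x -> g (f x) = x) /\
    continuous_on (fun _ => True) g.

(** A flow in D: Phi is meaningful on its domain DPhi ⊆ D x R. *)
Definition is_flow {X : NormedSpace} (D : X -> Prop)
    (DPhi : X -> R -> Prop) (Phi : X -> R -> X) : Prop :=
  (forall x t, DPhi x t -> D x) /\
  is_open_prod DPhi /\
  (forall x t, DPhi x t -> D (Phi x t)) /\
  continuous_on2 DPhi Phi /\
  (forall x, D x -> DPhi x 0) /\
  (forall x t1 t2 s, DPhi x t1 -> DPhi x t2 -> t1 <= s <= t2 -> DPhi x s) /\
  (forall x, D x -> Phi x 0 = x) /\
  (forall x t1 t2, DPhi x t1 -> DPhi x (t1 + t2) ->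
     DPhi (Phi x t1) t2 /\ Phi (Phi x t1) t2 = Phi x (t1 + t2)).

Definition Psi {Y : NormedSpace} (y0 : Y) (y : Y) (t : R) : Y :=
  vadd y0 (vscal (exp (- t)) (vsub y y0)).

Definition lifts_Psi {X Y : NormedSpace} (D : X -> Prop) (f : X -> Y) (y0 : Y)
    (DPhi : X -> R -> Prop) (Phi : X -> R -> X) : Prop :=
  is_flow D DPhi Phi /\
  forall x t, DPhi x t -> f (Phi x t) = Psi y0 (f x) t.

Definition auxiliary_flow {X Y : NormedSpace} (D : X -> Prop) (f : X -> Y) (y0 : Y)
    (DPhi : X -> R -> Prop) (Phi : X -> R -> X) : Prop :=
  lifts_Psi D f y0 DPhi Phi /\
  forall (DPhi' : X -> R -> Prop) (Phi' : X -> R -> X),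
    lifts_Psi D f y0 DPhi' Phi' -> forall x t, DPhi' x t -> DPhi x t.

(* Main.v *)
Require Import Defs.
From Stdlib Require Import Reals Lra Classical.
Import Defs.
Open Scope R_scope.

Lemma vadd_0l (N : NormedSpace) (x : N) : vadd vzero x = x.
Proof. rewrite vadd_comm; apply vadd_zero. Qed.

Lemma vadd_oppl (N : NormedSpace) (x : N) : vadd (vopp x) x = vzero.
Proof. rewrite vadd_comm; apply vadd_opp. Qed.

Lemma vadd_cancel (N : NormedSpace) (a b c : N) : vadd a b = vadd a c -> b = c.
Proof.
  intro H. rewrite <- (vadd_0l N b), <- (vadd_0l N c), <- (vadd_oppl N a).
  rewrite <- !vadd_assoc, H. reflexivity.
Qed.

Lemma vsub_add (N : NormedSpace) (a b : N) : vsub (vadd a b) a = b.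
Proof. unfold vsub. rewrite (vadd_comm _ a b), <- vadd_assoc, vadd_opp, vadd_zero. reflexivity. Qed.

Lemma vadd_sub (N : NormedSpace) (a b : N) : vadd a (vsub b a) = b.
Proof. unfold vsub. rewrite vadd_comm, <- vadd_assoc, vadd_oppl, vadd_zero. reflexivity. Qed.

Lemma vsub_eq0 (N : NormedSpace) (x y : N) : vsub x y = vzero -> x = y.
Proof.
  intro H. rewrite <- (vadd_sub N y x), H, vadd_zero. reflexivity.
Qed.

Lemma vsub_self (N : NormedSpace) (x : N) : vsub x x = vzero.
Proof. apply vadd_opp. Qed.

Lemma vscal0 (N : NormedSpace) (x : N) : vscal 0 x = vzero.
Proof.
  apply (vadd_cancel N (vscal 0 x)). rewrite vadd_zero, <- vscal_distr_l.
  f_equal; ring.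
Qed.

Lemma vscal_zero (N : NormedSpace) (a : R) : vscal a (@vzero N) = vzero.
Proof. rewrite <- (vscal0 N vzero), vscal_assoc. rewrite Rmult_0_r. reflexivity. Qed.

Lemma vopp_scal (N : NormedSpace) (x : N) : vopp x = vscal (-1) x.
Proof.
  apply (vadd_cancel N x). rewrite vadd_opp.
  rewrite <- (vscal_one N x) at 1. rewrite <- vscal_distr_l.
  replace (1 + -1) with 0 by ring. symmetry; apply vscal0.
Qed.

Lemma vnorm0 (N : NormedSpace) : vnorm (@vzero N) = 0.
Proof. rewrite <- (vscal0 N vzero), vnorm_scal, Rabs_R0. ring. Qed.

Lemma vnorm_opp (N : NormedSpace) (x : N) : vnorm (vopp x) = vnorm x.
Proof. rewrite vopp_scal, vnorm_scal. rewrite Rabs_left by lra. ring. Qed.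

Lemma vnorm_ge0 (N : NormedSpace) (x : N) : 0 <= vnorm x.
Proof.
  pose proof (vnorm_triangle N x (vopp x)) as H.
  rewrite vadd_opp, vnorm0, vnorm_opp in H. lra.
Qed.

Lemma vscal_sub (N : NormedSpace) (k : R) (a b : N) :
  vscal k (vsub a b) = vsub (vscal k a) (vscal k b).
Proof.
  unfold vsub. rewrite vscal_distr_r. f_equal.
  rewrite !vopp_scal, !vscal_assoc. f_equal; ring.
Qed.

Lemma vopp_sub (N : NormedSpace) (x y : N) : vopp (vsub x y) = vsub y x.
Proof.
  rewrite vopp_scal. unfold vsub. rewrite vscal_distr_r, vadd_comm. f_equal.
  - rewrite vopp_scal, vscal_assoc. replace (-1 * -1) with 1 by ring. apply vscal_one.
  - symmetry; apply vopp_scal.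
Qed.

Lemma dist_sym (N : NormedSpace) (x y : N) : dist x y = dist y x.
Proof. unfold dist. rewrite <- vopp_sub, vnorm_opp. reflexivity. Qed.

Lemma dist_tri (N : NormedSpace) (x y z : N) : dist x z <= dist x y + dist y z.
Proof.
  unfold dist. replace (vsub x z) with (vadd (vsub x y) (vsub y z)).
  apply vnorm_triangle.
  unfold vsub. rewrite <- vadd_assoc. f_equal.
  rewrite vadd_assoc, vadd_oppl, vadd_0l. reflexivity.
Qed.

Lemma dist_eq0 (N : NormedSpace) (x y : N) : dist x y = 0 -> x = y.
Proof. intro H. apply vsub_eq0, vnorm_eq0, H. Qed.

Lemma dist_self (N : NormedSpace) (x : N) : dist x x = 0.
Proof. unfold dist. rewrite vsub_self. apply vnorm0. Qed.

Lemma dist_ge0 (N : NormedSpace) (x y : N) : 0 <= dist x y.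
Proof. apply vnorm_ge0. Qed.

Lemma dist_addl (N : NormedSpace) (c a b : N) : dist (vadd c a) (vadd c b) = dist a b.
Proof.
  unfold dist. f_equal. symmetry.
  apply (vadd_cancel N (vadd c b)). rewrite vadd_sub.
  rewrite <- vadd_assoc, vadd_sub. reflexivity.
Qed.

Lemma dist_scal (N : NormedSpace) (k : R) (a b : N) :
  dist (vscal k a) (vscal k b) = Rabs k * dist a b.
Proof. unfold dist. rewrite <- vscal_sub, vnorm_scal. reflexivity. Qed.

Lemma dist_sub_r (N : NormedSpace) (a b c : N) : dist (vsub a c) (vsub b c) = dist a b.
Proof.
  unfold vsub at 1 2. rewrite (vadd_comm _ a), (vadd_comm _ b). apply dist_addl.
Qed.

Lemma dist_scal2 (N : NormedSpace) (k m : R) (a : N) :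
  dist (vscal k a) (vscal m a) = Rabs (k - m) * vnorm a.
Proof.
  unfold dist, vsub. rewrite vopp_scal, vscal_assoc, <- vscal_distr_l, vnorm_scal.
  f_equal; f_equal; ring.
Qed.

Lemma dist_add_y0 (N : NormedSpace) (y0 a : N) : dist (vadd y0 a) y0 = vnorm a.
Proof. unfold dist. rewrite vsub_add. reflexivity. Qed.
Lemma Psi_0 (N : NormedSpace) (y0 y : N) : Psi y0 y 0 = y.
Proof. unfold Psi. rewrite Ropp_0, exp_0, vscal_one. apply vadd_sub. Qed.

Lemma Psi_comp (N : NormedSpace) (y0 y : N) t1 t2 :
  Psi y0 (Psi y0 y t1) t2 = Psi y0 y (t1 + t2).
Proof.
  unfold Psi at 1. unfold Psi at 1. rewrite vsub_add, vscal_assoc, <- exp_plus.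
  unfold Psi. do 3 f_equal. ring.
Qed.

Lemma Psi_line (N : NormedSpace) (y0 w : N) s t :
  Psi y0 (vadd y0 (vscal s w)) t = vadd y0 (vscal (exp (-t) * s) w).
Proof. unfold Psi. rewrite vsub_add, vscal_assoc. reflexivity. Qed.

Lemma dist_Psi_y0 (N : NormedSpace) (y0 y : N) t :
  dist (Psi y0 y t) y0 = exp (- t) * dist y y0.
Proof.
  unfold Psi. rewrite dist_add_y0, vnorm_scal, Rabs_pos_eq. reflexivity.
  left; apply exp_pos.
Qed.

Lemma exp_cont (t eps : R) : eps > 0 -> exists delta, delta > 0 /\
  forall s, Rabs (s - t) < delta -> Rabs (exp (- s) - exp (- t)) < eps.
Proof.
  intro He. pose proof (derivable_continuous exp derivable_exp (- t)) as C.
  unfold continuity_pt, continue_in, limit1_in, limit_in in C.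
  destruct (C eps He) as [alp [Ha H]]. exists alp. split; [exact Ha|].
  intros s Hs. destruct (Req_dec s t) as [->|Hne].
  - unfold Rminus. rewrite Rplus_opp_r, Rabs_R0. exact He.
  - apply (H (- s)). split.
    + split; [exact I| intro E; apply Hne; lra].
    + simpl. unfold R_dist. replace (- s - - t) with (- (s - t)) by ring.
      rewrite Rabs_Ropp. exact Hs.
Qed.

Lemma Psi_cont (N : NormedSpace) (y0 y : N) (t eps : R) : eps > 0 ->
  exists delta, delta > 0 /\ forall y' s, dist y' y < delta -> Rabs (s - t) < delta ->
    dist (Psi y0 y' s) (Psi y0 y t) < eps.
Proof.
  intro He. set (M := vnorm (vsub y y0)).
  assert (HM : 0 <= M) by apply vnorm_ge0.
  destruct (exp_cont t (eps / 2 / (M + 1))) as [d1 [Hd1 H1]].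
  { apply Rdiv_lt_0_compat; lra. }
  set (K := exp (- t + 1)).
  assert (HK : 0 < K) by apply exp_pos.
  exists (Rmin 1 (Rmin d1 (eps / 2 / K))). split.
  { apply Rmin_pos; [lra| apply Rmin_pos; [lra| apply Rdiv_lt_0_compat; lra]]. }
  intros y' s Hy Hs.
  pose proof (Rmin_l 1 (Rmin d1 (eps / 2 / K))).
  pose proof (Rmin_r 1 (Rmin d1 (eps / 2 / K))).
  pose proof (Rmin_l d1 (eps / 2 / K)). pose proof (Rmin_r d1 (eps / 2 / K)).
  unfold Psi. rewrite dist_addl.
  eapply Rle_lt_trans; [apply (dist_tri _ _ (vscal (exp (-s)) (vsub y y0)))|].
  rewrite dist_scal, dist_sub_r, dist_scal2. fold M.
  rewrite (Rabs_pos_eq (exp (-s))) by (left; apply exp_pos).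
  assert (Es : exp (- s) <= K).
  { unfold K. destruct (Rle_lt_or_eq_dec _ _ (Rle_refl (-s))) as [_|_];
    apply Rlt_le, exp_increasing; apply Rabs_def2 in Hs; lra. }
  assert (A1 : exp (- s) * dist y' y < eps / 2).
  { apply Rle_lt_trans with (K * dist y' y).
    - apply Rmult_le_compat_r; [apply dist_ge0| exact Es].
    - assert (Hq : dist y' y < eps / 2 / K) by lra.
      apply (Rmult_lt_compat_l K) in Hq; [|exact HK].
      replace (K * (eps / 2 / K)) with (eps / 2) in Hq by (field; lra). exact Hq. }
  assert (A2 : Rabs (exp (- s) - exp (- t)) * M < eps / 2).
  { assert (Hx : Rabs (exp (- s) - exp (- t)) < eps / 2 / (M + 1)) by (apply H1; lra).
    apply Rle_lt_trans with (Rabs (exp (- s) - exp (- t)) * (M + 1)).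
    - apply Rmult_le_compat_l; [apply Rabs_pos| lra].
    - apply (Rmult_lt_compat_r (M + 1)) in Hx; [|lra].
      replace (eps / 2 / (M + 1) * (M + 1)) with (eps / 2) in Hx by (field; lra). exact Hx. }
  lra.
Qed.
Lemma dir1 (X Y : NormedSpace) (D : X -> Prop) (f : X -> Y) (y0 : Y)
  (DPhi : X -> R -> Prop) (Phi : X -> R -> X) :
  is_open D -> auxiliary_flow D f y0 DPhi Phi -> homeomorphism_onto D f ->
  forall x t, D x -> DPhi x t.
Proof.
  intros HDo [_ Hmax] [Hfc [g [Hg1 [Hg2 Hgc]]]] x t Hx.
  apply (Hmax (fun x _ => D x) (fun x t => g (Psi y0 (f x) t))); [|exact Hx].
  split.
  - split; [intros; assumption|].
    split.
    { intros x1 t1 H1. destruct (HDo x1 H1) as [e [He He']].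
      exists e. split; [exact He|]. intros; apply He'; assumption. }
    split; [intros; apply Hg1|].
    split.
    { intros x1 t1 H1 eps Heps.
      destruct (Hgc (Psi y0 (f x1) t1) I eps Heps) as [dg [Hdg Hg]].
      destruct (Psi_cont Y y0 (f x1) t1 dg Hdg) as [dp [Hdp Hp]].
      destruct (Hfc x1 H1 dp Hdp) as [df [Hdf Hf]].
      exists (Rmin dp df). split; [apply Rmin_pos; assumption|].
      intros y s Hy Hyd Hs. apply Hg; [exact I|].
      apply Hp.
      - apply Hf; [exact Hy| eapply Rlt_le_trans; [exact Hyd| apply Rmin_r]].
      - eapply Rlt_le_trans; [exact Hs| apply Rmin_l]. }
    split; [intros; assumption|].
    split; [intros; assumption|].
    split.
    { intros x1 H1. rewrite Psi_0. apply Hg2, H1. }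
    intros x1 t1 t2 H1 _. split; [apply Hg1|].
    rewrite (proj2 (Hg1 _)), Psi_comp. reflexivity.
  - intros x1 t1 H1. apply Hg1.
Qed.
Lemma fwd (X Y : NormedSpace) (D : X -> Prop) (f : X -> Y) (Phi : X -> R -> X)
  (U0 : X -> Prop) (V0 : Y -> Prop) (g0 : Y -> X) (y0 : Y) (r : R)
  (Hcont : forall x t, D x -> forall eps, eps > 0 -> exists delta, delta > 0 /\
     forall y s, D y -> dist y x < delta -> Rabs (s - t) < delta -> dist (Phi y s) (Phi x t) < eps)
  (Hid : forall x, D x -> Phi x 0 = x)
  (Hlift : forall x t, D x -> f (Phi x t) = Psi y0 (f x) t)
  (HU0o : is_open U0) (HU0D : forall u, U0 u -> D u)
  (HUV : forall u, U0 u -> V0 (f u) /\ g0 (f u) = u)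
  (HVU : forall v, V0 v -> U0 (g0 v) /\ f (g0 v) = v)
  (Hg0c : continuous_on V0 g0) (HB : forall y, dist y y0 < r -> V0 y) :
  forall c T, U0 c -> dist (f c) y0 < r -> 0 <= T -> U0 (Phi c T).
Proof.
  intros c T Hc Hfc HT. apply NNPP. intro Hn.
  assert (HDc : D c) by (apply HU0D, Hc).
  set (E := fun tau => 0 <= tau <= T /\ forall t, 0 <= t <= tau -> U0 (Phi c t)).
  assert (Hb : bound E) by (exists T; intros x [Hx _]; lra).
  assert (Hne : exists x, E x).
  { exists 0. split; [lra|]. intros t Ht. replace t with 0 by lra. rewrite Hid; assumption. }
  destruct (completeness E Hb Hne) as [m [Hub Hlub]].
  assert (Hm0 : 0 <= m) by (apply Hub; split; [lra|]; intros t Ht; replace t with 0 by lra; rewrite Hid; assumption).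
  assert (HmT : m <= T) by (apply Hlub; intros x [Hx _]; lra).
  assert (C1 : forall t, 0 <= t < m -> U0 (Phi c t)).
  { intros t Ht. apply NNPP; intro Hnt.
    assert (m <= t); [|lra].
    apply Hlub. intros tau [Htau Hall]. apply Rnot_lt_le. intro Hlt.
    apply Hnt, Hall. lra. }
  assert (Hdfz : forall t, 0 <= t -> dist (f (Phi c t)) y0 < r).
  { intros t Ht. rewrite Hlift by assumption. rewrite dist_Psi_y0.
    assert (exp (- t) <= 1).
    { rewrite <- exp_0. destruct (Req_dec t 0) as [->|]; [rewrite Ropp_0; lra|].
      left; apply exp_increasing; lra. }
    pose proof (dist_ge0 _ (f c) y0). nra. }
  assert (C2 : U0 (Phi c m)).
  { destruct (Req_dec m 0) as [Hm|Hm].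
    { rewrite Hm, Hid; assumption. }
    set (z := Phi c m).
    assert (HVz : V0 (f z)) by (apply HB, Hdfz, Hm0).
    set (w := g0 (f z)).
    assert (Hzw : z = w).
    { apply dist_eq0. apply Rle_antisym; [|apply dist_ge0].
      apply Rnot_lt_le. intro Hpos.
      set (eps := dist z w / 2).
      assert (Heps : eps > 0) by (unfold eps; lra).
      destruct (Hg0c (f z) HVz eps Heps) as [d2 [Hd2 Hg]].
      destruct (Psi_cont Y y0 (f c) m d2 Hd2) as [d3 [Hd3 Hp]].
      destruct (Hcont c m HDc eps Heps) as [d1 [Hd1 Hc1]].
      set (dd := Rmin d1 d3).
      assert (Hdd : dd > 0) by (apply Rmin_pos; assumption).
      assert (Hdd1 : dd <= d1) by apply Rmin_l. assert (Hdd3 : dd <= d3) by apply Rmin_r.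
      set (t := Rmax 0 (m - dd / 2)).
      assert (Ht0 : 0 <= t) by apply Rmax_l.
      assert (Htm : t < m).
      { unfold t, Rmax. destruct (Rle_dec 0 (m - dd / 2)); lra. }
      assert (Htm2 : Rabs (t - m) < dd).
      { unfold t, Rmax. destruct (Rle_dec 0 (m - dd / 2)); apply Rabs_def1; lra. }
      set (p := Phi c t).
      assert (Hp0 : U0 p) by (apply C1; lra).
      assert (Hpz : dist p z < eps).
      { apply Hc1; [exact HDc| rewrite dist_self; lra| lra]. }
      assert (Hpw : dist p w < eps).
      { destruct (HUV p Hp0) as [HVp Hgp].
        rewrite <- Hgp. apply Hg; [exact HVp|].
        unfold p, z. rewrite !Hlift by assumption.
        apply Hp; [rewrite dist_self; lra| lra]. }
      pose proof (dist_tri _ z p w) as Htr. rewrite (dist_sym _ z p) in Htr.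
      unfold eps in *. lra. }
    rewrite Hzw. apply HVU, HVz. }
  destruct (Rle_lt_or_eq_dec m T HmT) as [HmT'|HmT'].
  - destruct (HU0o _ C2) as [rho [Hrho Hrho']].
    destruct (Hcont c m HDc rho Hrho) as [d1 [Hd1 Hc1]].
    set (tau := Rmin T (m + d1 / 2)).
    assert (Htau : E tau).
    { split. { unfold tau, Rmin. destruct (Rle_dec T (m + d1 / 2)); lra. }
      intros t Ht. destruct (Rlt_le_dec t m) as [Hl|Hl].
      - apply C1; lra.
      - apply Hrho'. apply Hc1; [exact HDc| rewrite dist_self; lra|].
        pose proof (Rmin_r T (m + d1 / 2)). apply Rabs_def1; fold tau in H; lra. }
    pose proof (Hub tau Htau).
    unfold tau, Rmin in H. destruct (Rle_dec T (m + d1 / 2)); lra.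
  - apply Hn. rewrite <- HmT'. exact C2.
Qed.
Lemma sfun_pos (r d : R) : r > 0 -> 0 <= d -> 0 < r / (2 * (1 + d)).
Proof. intros. apply Rdiv_lt_0_compat; lra. Qed.

Lemma sfun_eq (r d : R) : 0 <= d -> r / (2 * (1 + d)) * (1 + d) = r / 2.
Proof. intros. field. lra. Qed.

Lemma sfun_lt (r d e : R) : r > 0 -> 0 <= d -> e < 1 + d -> r / (2 * (1 + d)) * e < r.
Proof.
  intros Hr Hd He. pose proof (sfun_pos r d Hr Hd). pose proof (sfun_eq r d Hd).
  apply Rle_lt_trans with (r / (2 * (1 + d)) * (1 + d)).
  - apply Rmult_le_compat_l; lra.
  - lra.
Qed.

Lemma dir2 (X Y : NormedSpace) (D : X -> Prop) (f : X -> Y) (x0 : X)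
  (HDo : is_open D) (HDconn : is_connected D) (Hx0 : D x0)
  (Hf : local_homeomorphism D f)
  (DPhi : X -> R -> Prop) (Phi : X -> R -> X)
  (HPhi : auxiliary_flow D f (f x0) DPhi Phi)
  (Hglob : forall x t, D x -> DPhi x t) : homeomorphism_onto D f.
Proof.
  destruct HPhi as [[[HD1 [Hop [HDPhi [Hc2 [H0 [Hint [Hid Hcomp]]]]]]] Hlift0] _].
  set (y0 := f x0).
  assert (Hcont : forall x t, D x -> forall eps, eps > 0 -> exists delta, delta > 0 /\
     forall y s, D y -> dist y x < delta -> Rabs (s - t) < delta -> dist (Phi y s) (Phi x t) < eps).
  { intros x t Hx eps He. destruct (Hc2 x t (Hglob x t Hx) eps He) as [d [Hd H]].
    exists d. split; [exact Hd|]. intros y s Hy; apply H, Hglob, Hy. }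
  assert (HPD : forall x t, D x -> D (Phi x t)) by (intros; apply HDPhi, Hglob; assumption).
  assert (Hcomp' : forall x t1 t2, D x -> Phi (Phi x t1) t2 = Phi x (t1 + t2)).
  { intros. apply (Hcomp x t1 t2); apply Hglob; assumption. }
  assert (Hlift : forall x t, D x -> f (Phi x t) = Psi y0 (f x) t).
  { intros; apply Hlift0, Hglob; assumption. }
  assert (fcont : forall x, D x -> forall eps, eps > 0 -> exists delta, delta > 0 /\
     forall x', dist x' x < delta -> dist (f x') (f x) < eps).
  { intros x Hx eps He. destruct (Hf x Hx) as [U [V [g [HUo [HUx [_ [_ [_ [_ [HfU _]]]]]]]]]].
    destruct (HUo x HUx) as [rho [Hrho HU]]. destruct (HfU x HUx eps He) as [d [Hd H]].
    exists (Rmin rho d). split; [apply Rmin_pos; assumption|].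
    intros x' Hx'. apply H.
    - apply HU. eapply Rlt_le_trans; [exact Hx'| apply Rmin_l].
    - eapply Rlt_le_trans; [exact Hx'| apply Rmin_r]. }
  destruct (Hf x0 Hx0) as [U0 [V0 [g0 [HU0o [HU0x0 [HU0D [HV0o [HUV [HVU [_ Hg0c]]]]]]]]]].
  destruct (HV0o y0 (proj1 (HUV x0 HU0x0))) as [r [Hr HB]].
  assert (Hfwd := fwd X Y D f Phi U0 V0 g0 y0 r Hcont Hid Hlift HU0o HU0D HUV HVU Hg0c HB).
  assert (Hpt : forall s w, 0 < s -> s * vnorm w < r ->
     U0 (g0 (vadd y0 (vscal s w))) /\ f (g0 (vadd y0 (vscal s w))) = vadd y0 (vscal s w)).
  { intros s w Hs Hsw. apply HVU, HB. rewrite dist_add_y0, vnorm_scal, Rabs_pos_eq; lra. }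
  assert (HI1 : forall w s1 s2, 0 < s2 -> s2 <= s1 -> s1 * vnorm w < r -> s2 * vnorm w < r ->
     Phi (g0 (vadd y0 (vscal s1 w))) (ln s1) = Phi (g0 (vadd y0 (vscal s2 w))) (ln s2)).
  { intros w s1 s2 Hs2 H12 Hr1 Hr2.
    destruct (Hpt s1 w ltac:(lra) Hr1) as [Hc Hfc].
    set (c := g0 (vadd y0 (vscal s1 w))) in *.
    assert (Htau : 0 <= ln s1 - ln s2).
    { destruct (Rle_lt_or_eq_dec _ _ H12) as [Hl|Hl].
      - pose proof (ln_increasing s2 s1 Hs2 Hl). lra.
      - rewrite Hl. lra. }
    assert (Hc' : dist (f c) y0 < r) by (rewrite Hfc, dist_add_y0, vnorm_scal, Rabs_pos_eq; lra).
    pose proof (Hfwd c _ Hc Hc' Htau) as HU.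
    destruct (HUV _ HU) as [_ Hg].
    rewrite Hlift, Hfc, Psi_line in Hg by (apply HU0D; exact Hc).
    replace (exp (- (ln s1 - ln s2)) * s1) with s2 in Hg.
    2:{ replace (- (ln s1 - ln s2)) with (ln s2 + - ln s1) by ring.
        rewrite exp_plus, exp_Ropp, !exp_ln by lra. field. lra. }
    rewrite Hg, Hcomp' by (apply HU0D; exact Hc). f_equal. ring. }
  assert (HI : forall w s1 s2, 0 < s1 -> 0 < s2 -> s1 * vnorm w < r -> s2 * vnorm w < r ->
     Phi (g0 (vadd y0 (vscal s1 w))) (ln s1) = Phi (g0 (vadd y0 (vscal s2 w))) (ln s2)).
  { intros w s1 s2 H1 H2 H3 H4. destruct (Rle_dec s2 s1).
    - apply HI1; assumption.
    - symmetry. apply HI1; try assumption. lra. }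
  pose (sfun := fun y : Y => r / (2 * (1 + dist y y0))).
  assert (Hsp : forall y, 0 < sfun y) by (intro; apply sfun_pos; [exact Hr| apply dist_ge0]).
  pose (G := fun y : Y => Phi (g0 (vadd y0 (vscal (sfun y) (vsub y y0)))) (ln (sfun y))).
  assert (Hsv : forall y, sfun y * vnorm (vsub y y0) < r).
  { intro y. apply sfun_lt; [exact Hr| apply dist_ge0|]. unfold dist; lra. }
  assert (G1 : forall y, D (G y)).
  { intro y. apply HPD, HU0D, (Hpt _ _ (Hsp y) (Hsv y)). }
  assert (G2 : forall y, f (G y) = y).
  { intro y. unfold G. destruct (Hpt _ _ (Hsp y) (Hsv y)) as [Hu Hfu].
    rewrite Hlift by (apply HU0D, Hu). rewrite Hfu, Psi_line.
    rewrite exp_Ropp, exp_ln by apply Hsp.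
    replace (/ sfun y * sfun y) with 1 by (field; apply Rgt_not_eq, Hsp).
    rewrite vscal_one. apply vadd_sub. }
  assert (G3 : continuous_on (fun _ => True) G).
  { intros ys _ eps He. set (ss := sfun ys).
    assert (Hss : 0 < ss) by apply Hsp.
    pose (a := fun y : Y => vadd y0 (vscal ss (vsub y y0))).
    assert (Hva : forall y, dist y ys < 1 -> ss * vnorm (vsub y y0) < r).
    { intros y Hy. apply sfun_lt; [exact Hr| apply dist_ge0|].
      pose proof (dist_tri _ y ys y0). unfold dist at 1 in H. lra. }
    destruct (Hpt ss (vsub ys y0) Hss (Hsv ys)) as [Hus Hfus].
    destruct (Hcont _ (ln ss) (HU0D _ Hus) eps He) as [d1 [Hd1 Hc1]].
    assert (Hays : V0 (a ys)).
    { apply HB. unfold a. rewrite dist_add_y0, vnorm_scal, Rabs_pos_eq by lra. apply Hsv. }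
    destruct (Hg0c (a ys) Hays d1 Hd1) as [d2 [Hd2 Hg2]].
    exists (Rmin 1 (d2 / ss)). split; [apply Rmin_pos; [lra| apply Rdiv_lt_0_compat; lra]|].
    intros y _ Hy.
    assert (Hy1 : dist y ys < 1) by (eapply Rlt_le_trans; [exact Hy| apply Rmin_l]).
    assert (Hy2 : dist y ys < d2 / ss) by (eapply Rlt_le_trans; [exact Hy| apply Rmin_r]).
    assert (HGy : G y = Phi (g0 (a y)) (ln ss)).
    { unfold G, a. apply HI; [apply Hsp| exact Hss| apply Hsv| apply Hva, Hy1]. }
    rewrite HGy. unfold G. fold ss. fold (a ys).
    destruct (Hpt ss (vsub y y0) Hss (Hva y Hy1)) as [Huy _].
    apply Hc1.
    - apply HU0D, Huy.
    - apply Hg2.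
      + apply HB. unfold a. rewrite dist_add_y0, vnorm_scal, Rabs_pos_eq; [apply Hva, Hy1|lra].
      + unfold a. rewrite dist_addl, dist_scal, dist_sub_r, Rabs_pos_eq by lra.
        apply (Rmult_lt_compat_l ss) in Hy2; [|exact Hss].
        replace (ss * (d2 / ss)) with d2 in Hy2 by (field; lra). exact Hy2.
    - unfold Rminus. rewrite Rplus_opp_r, Rabs_R0. exact Hd1. }
  assert (HPo : is_open (fun x => D x /\ G (f x) = x)).
  { intros x [Hx HGx].
    set (s := sfun (f x)) in *. set (w := vsub (f x) y0) in *. set (T := ln s).
    destruct (Hpt s w (Hsp _) (Hsv _)) as [Hu Hfu].
    set (u := g0 (vadd y0 (vscal s w))) in *.
    assert (HGx' : Phi u T = x) by exact HGx.
    assert (Hxu : Phi x (- T) = u).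
    { rewrite <- HGx', Hcomp' by (apply HU0D, Hu). replace (T + - T) with 0 by ring.
      apply Hid, HU0D, Hu. }
    destruct (HU0o u Hu) as [rho [Hrho HUr]].
    destruct (Hcont x (- T) Hx rho Hrho) as [d1 [Hd1 Hc1]].
    destruct (fcont x Hx 1 ltac:(lra)) as [df [Hdf Hfc]].
    destruct (HDo x Hx) as [dD [HdD HDr]].
    exists (Rmin dD (Rmin d1 df)). split; [repeat apply Rmin_pos; assumption|].
    intros x' Hx'.
    pose proof (Rmin_l dD (Rmin d1 df)). pose proof (Rmin_r dD (Rmin d1 df)).
    pose proof (Rmin_l d1 df). pose proof (Rmin_r d1 df).
    assert (HDx' : D x') by (apply HDr; lra).
    split; [exact HDx'|].
    set (u' := Phi x' (- T)).
    assert (Hu' : U0 u').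
    { apply HUr. unfold u'. rewrite <- Hxu. apply Hc1; [exact HDx'| lra|].
      unfold Rminus. rewrite Rplus_opp_r, Rabs_R0. lra. }
    set (w' := vsub (f x') y0).
    assert (Hfu' : f u' = vadd y0 (vscal s w')).
    { unfold u'. rewrite Hlift by exact HDx'. unfold Psi. rewrite Ropp_involutive.
      unfold T. rewrite exp_ln by apply Hsp. reflexivity. }
    assert (Hxu' : Phi u' T = x').
    { unfold u'. rewrite Hcomp' by exact HDx'. replace (- T + T) with 0 by ring.
      apply Hid, HDx'. }
    assert (Hsw' : s * vnorm w' < r).
    { apply sfun_lt; [exact Hr| apply dist_ge0|].
      pose proof (dist_tri _ (f x') (f x) y0) as k1. pose proof (Hfc x' ltac:(lra)) as k2.
      unfold w'. change (vnorm (vsub (f x') y0)) with (dist (f x') y0). lra. }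
    unfold G. fold w'.
    rewrite (HI w' (sfun (f x')) s (Hsp _) (Hsp _) (Hsv _) Hsw').
    rewrite <- Hfu', (proj2 (HUV u' Hu')). exact Hxu'. }
  assert (HQo : is_open (fun x => D x /\ G (f x) <> x)).
  { intros x [Hx HGx].
    assert (Hd : 0 < dist (G (f x)) x).
    { destruct (Rle_lt_or_eq_dec _ _ (dist_ge0 _ (G (f x)) x)) as [h|h]; [exact h|].
      exfalso; apply HGx, dist_eq0; auto. }
    set (d := dist (G (f x)) x) in *.
    destruct (G3 (f x) I (d / 3) ltac:(lra)) as [dG [HdG HG]].
    destruct (fcont x Hx dG HdG) as [df [Hdf Hfc]].
    destruct (HDo x Hx) as [dD [HdD HDr]].
    exists (Rmin dD (Rmin df (d / 3))).
    split; [repeat apply Rmin_pos; lra|].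
    intros x' Hx'.
    pose proof (Rmin_l dD (Rmin df (d / 3))). pose proof (Rmin_r dD (Rmin df (d / 3))).
    pose proof (Rmin_l df (d / 3)). pose proof (Rmin_r df (d / 3)).
    split; [apply HDr; lra|].
    intro E.
    assert (h1 : dist (G (f x')) (G (f x)) < d / 3) by (apply HG; [exact I| apply Hfc; lra]).
    pose proof (dist_tri _ (G (f x)) (G (f x')) x) as h2.
    rewrite (dist_sym _ (G (f x)) (G (f x'))), E in h2. rewrite E in h1. fold d in h2. lra. }
  destruct (HDconn _ _ HPo HQo) as [Hall|Hall].
  - intros x Hx. destruct (classic (G (f x) = x)); [left|right]; split; assumption.
  - intros x Hx [_ h1] [_ h2]. exact (h2 h1).
  - exfalso.
    set (p := Phi x0 (ln (sfun y0))).
    assert (Hp : D p) by (apply HPD, Hx0).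
    apply (Hall p Hp). split; [exact Hp|].
    assert (Hfp : f p = y0).
    { unfold p. rewrite Hlift by exact Hx0. unfold Psi. fold y0. rewrite vsub_self, vscal_zero.
      apply vadd_zero. }
    rewrite Hfp. unfold G. rewrite vsub_self, vscal_zero, vadd_zero.
    unfold y0; rewrite (proj2 (HUV x0 HU0x0)). reflexivity.
  - split.
    { intros x Hx eps He. destruct (fcont x Hx eps He) as [d [Hd H]].
      exists d. split; [exact Hd|]. intros; apply H; assumption. }
    exists G. split; [intro y; split; [apply G1| apply G2]|].
    split; [|exact G3].
    intros x Hx. apply NNPP. intro h. apply (Hall x Hx). split; assumption.
Qed.

Theorem proposition2p2 (X Y : BanachSpace) (D : X -> Prop) (f : X -> Y) (x0 : X)
  (HDopen : is_open D) (HDconn : is_connected D) (Hx0 : D x0)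
  (Hf : local_homeomorphism D f)
  (DPhi : X -> R -> Prop) (Phi : X -> R -> X)
  (HPhi : auxiliary_flow D f (f x0) DPhi Phi) :
  homeomorphism_onto D f <-> (forall x t, D x -> DPhi x t).
Proof.
  split.
  - intro H. exact (dir1 X Y D f (f x0) DPhi Phi HDopen HPhi H).
  - intro H. exact (dir2 X Y D f x0 HDopen HDconn Hx0 Hf DPhi Phi HPhi H).
Qed.
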